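(* Let $\{p_\alpha\}$ be a one-parameter exponential family on $\mathbb{R}$ with canonical parameter $\alpha$, sufficient statistic $x$, base measure $p_0$, i.e. $\frac{dp_\alpha}{dp_0}(x)=\exp(\alpha x-\Phi(\alpha))$ with $\Phi(0)=0$, where $\Phi$ is smooth and finite on $\mathbb{R}$ and $\Phi''(0)\neq 0$. Consider the model in which, given $X\in\mathbb{R}_{>0}^{m\times n}$ and $u\in\mathbb{R}^m$, $v\in\mathbb{R}^n$, independently $Y_{ij}\sim p_{\alpha_{ij}}$ with $\alpha_{ij}=u_i+\log X_{ij}-v_j$, with log-likelihood $L(u,v;Y)=\sum_iu_ip_i-\sum_jv_jq_j-\sum_{ij}\Phi(u_i+w_{ij})+C(Y)$ where $p_i=\sum_jY_{ij}$, $q_j=\sum_iY_{ij}$, $w_{ij}=\log X_{ij}-v_j$. Suppose the MLE satisfies a generalized proportional fitting equation for all parameters, in the sense that there are smooth functions $f,h:\mathbb{R}\to\mathbb{R}$ with $$h(u_i)\sum_j f(w_{ij})=\sum_j\Phi'(u_i+w_{ij})\quad\text{for all } u_i\in\mathbb{R}\text{ and all } (w_{ij})_j\in\mathbb{R}^n$$ (equivalently, $\partial_{u_i}L=0$ iff $h(u_i)=p_i/\sum_jf(w_{ij})$). Then there exist constants $a,b\in\mathbb{R}$ with $\Phi(\alpha)=e^{a\alpha+b}-e^b$ for all $\alpha$; i.e. $p_\alpha$ is the law of $aZ$ with $Z\sim\mathrm{Poisson}(e^{a\alpha+b})$ (a scaled Poisson family). Conversely, scaled Poisson families satisfy such an equation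 (with $f=h=\exp$ in the unscaled case, recovering the IPF equations). *)

(* Defs.v *)
From mathcomp Require Import all_boot all_order all_algebra.
From mathcomp Require Import all_classical all_reals all_analysis.
Set Implicit Arguments. Unset Strict Implicit. Unset Printing Implicit Defensive.
Import Order.TTheory GRing.Theory Num.Theory.
Local Open Scope ring_scope.

Definition log_partition (R : realType) (p0 : {measure set R -> \bar R})
  (alpha : R) : R :=
  ln (fine (\int[p0]_x (expR (alpha * x))%:E)%E).

Definition smooth_fun (R : realType) (f : R -> R) : Prop :=
  forall (k : nat) (x : R), derivable (derive1n k f) x 1.

(* Main.v *)
Require Import Defs.
From mathcomp Require Import all_boot all_order all_algebra.
From mathcomp Require Import all_classical all_reals all_analysis.
Import Order.TTheory GRing.Theory Num.Theory.
Local Open Scope ring_scope.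
From mathcomp Require Import ring lra.


Lemma is_derive_expM {R : realType} (lam x : R) : is_derive x 1 (fun y => expR (lam * y)) (lam * expR (lam * x)).
Proof. by apply: trigger_derive; rewrite /GRing.scale /= mulr1 mulrC. Qed.

Lemma ode_exp {R : realType} (g : R -> R) (lam : R) :
  (forall x : R, is_derive x (1:R) g (lam * g x)) -> forall x, g x = g 0 * expR (lam * x).
Proof.
move=> dg x.
pose q := fun y => g y * expR (- lam * y).
have dq (y : R) : is_derive y (1:R) q 0.
  have dgy := dg y; apply: trigger_derive; rewrite /GRing.scale /=.
  ring.
have := is_derive_0_is_cst x 0 dq; rewrite /q /= mulr0 expR0 mulr1 => <-.
by rewrite -mulrA -expRD mulNr addNr expR0 mulr1.
Qed.

Lemma deriv_uniq {R : realType} (F G : R -> R) (x a b : R) : F = G -> is_derive x 1 F a -> is_derive x 1 G b -> a = b.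
Proof. by move=> -> h1 h2; rewrite -(@derive_val _ _ _ _ _ _ _ h1) -(@derive_val _ _ _ _ _ _ _ h2). Qed.

Lemma smooth_is_derive {R : realType} (F : R -> R) (x : R) : smooth_fun F -> is_derive x (1:R) F (derive1 F x).
Proof.
move=> sF; have := sF 0%N x; rewrite derive1n0 => /derivableP; by rewrite derive1E.
Qed.

Lemma smooth_is_derive2 {R : realType} (F : R -> R) (x:R) : smooth_fun F -> is_derive x (1:R) (derive1 F) (derive1n 2 F x).
Proof.
move=> sF; have := sF 1%N x; rewrite derive1n1 => /derivableP.
by rewrite derive1nS derive1n1 derive1E.
Qed.

Lemma fwd_analysis {R : realType} (Phi f h : R -> R) (n : nat) : (0 < n)%N -> smooth_fun Phi ->
  derive1n 2 Phi 0 != 0 -> Phi 0 = 0 ->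
  (forall (u : R) (w : 'I_n -> R),
        h u * (\sum_(j < n) f (w j)) = \sum_(j < n) derive1 Phi (u + w j)) ->
  exists K lam : R, K != 0 /\ lam != 0 /\ forall x, Phi x = K * (expR (lam * x) - 1).
Proof.
move=> n0 sP d2 P0 eqn.
have hg u c : h u * f c = derive1 Phi (u + c).
  have := eqn u (fun _ => c). rewrite !sumr_const card_ord mulrnAr => /eqP.
  by rewrite (eqr_pMn2r n0) => /eqP.
set g := derive1 Phi.
have gm x y : g (y + x) * g 0 = g x * g y.
  have e1 : g (y + x) = h y * f x by rewrite hg.
  have e2 : g 0 = h 0 * f 0 by rewrite hg addr0.
  have e3 : g x = h 0 * f x by rewrite hg add0r.
  have e4 : g y = h y * f 0 by rewrite hg addr0.
  rewrite e1 e2 e3 e4; ring.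
have d2g (p : R) := smooth_is_derive2 Phi p sP.
rewrite -/g in d2g.
have rel x : derive1n 2 Phi x * g 0 = g x * derive1n 2 Phi 0.
  apply: (@deriv_uniq R (fun y => g (y + x) * g 0) (fun y => g x * g y) 0).
  - by apply/funext => y; rewrite gm.
  - have hs : is_derive (0:R) (1:R) (fun y : R => y + x) 1.
      by apply: trigger_derive; rewrite addr0.
    have hc := @is_derive1_comp R g (fun y => y + x) 0 _ _ (d2g (0 + x)) hs.
    apply: trigger_derive; rewrite /GRing.scale /=.
    by rewrite add0r mulr0 add0r mulr1 mulrC.
have g0 : g 0 != 0.
  apply/negP => /eqP g00.
  have gz x : g x = 0.
    have := rel x; rewrite g00 mulr0 => /esym/eqP; rewrite mulf_eq0 (negbTE d2) orbF.
    by move/eqP.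
  move/negP: d2; apply; apply/eqP.
  apply: (@deriv_uniq R g (cst 0) 0).
  - by apply/funext => y; rewrite gz.
set lam := derive1n 2 Phi 0 / g 0.
have lam0 : lam != 0 by rewrite mulf_neq0 // invr_eq0.
have dg (x : R) : is_derive x (1:R) g (lam * g x).
  apply: (is_derive_eq (d2g x)).
  by rewrite /lam -(mulfK g0 (derive1n 2 Phi x)) rel; field.
have gE := ode_exp g lam dg.
exists (g 0 / lam), lam; split; first by rewrite mulf_neq0 // invr_eq0.
split => // x.
pose q := fun y => Phi y - g 0 / lam * expR (lam * y).
have dq (y : R) : is_derive y (1:R) q 0.
  have dPy := smooth_is_derive Phi y sP.
  have dE := is_derive_expM lam y.
  apply: trigger_derive; rewrite /GRing.scale /=.
  by rewrite -/g (gE y); field.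
have := is_derive_0_is_cst x 0 dq; rewrite /q /= P0 mulr0 expR0.
move=> e; have -> : Phi x = (Phi x - g 0 / lam * expR (lam * x)) + g 0 / lam * expR (lam * x) by ring.
rewrite e; ring.
Qed.

Section KeyIneq.
Local Open Scope ereal_scope.

Lemma key_ineq {R : realType} (p0 : {measure set R -> \bar R}) (c : R) :
  (forall alpha : R, p0.-integrable setT (fun x => (expR (alpha * x))%:E)) ->
  (2 * fine (\int[p0]_x (expR (0 * x))%:E) <=
   expR c * fine (\int[p0]_x (expR (1 * x))%:E) + expR (- c) * fine (\int[p0]_x (expR (-1 * x))%:E))%R.
Proof.
move=> hI.
have fk t : \int[p0]_x (expR (t * x))%:E = (fine (\int[p0]_x (expR (t * x))%:E))%:E.
  by rewrite fineK //; exact: integrable_fin_num.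
rewrite -lee_fin EFinD !EFinM -!fk.
rewrite -!integralZl //.
rewrite -integralD //; try exact: (integrableZl measurableT _ (hI _)).
apply: le_integral => //.
- exact: (integrableZl measurableT _ (hI _)).
- by apply: integrableD => //; exact: (integrableZl measurableT _ (hI _)).
move=> x _; rewrite -!EFinM -EFinD lee_fin mul0r expR0 mul1r -!expRD.
have h1 := expR_ge1Dx (c + x); have h2 := expR_ge1Dx (- c + -1 * x).
lra.
Qed.

End KeyIneq.

Lemma sign_pos {R : realType} (p0 : {measure set R -> \bar R}) (Phi : R -> R) (K lam : R) :
  (forall alpha : R, p0.-integrable setT (fun x => (expR (alpha * x))%:E)) ->
  (forall alpha : R, Phi alpha = log_partition p0 alpha) ->
  K != 0 -> lam != 0 -> (forall x, Phi x = K * (expR (lam * x) - 1)) -> 0 < K.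
Proof.
move=> hI hP K0 l0 PE.
have fk t : (\int[p0]_x (expR (t * x))%:E = (fine (\int[p0]_x (expR (t * x))%:E))%:E)%E.
  by rewrite fineK //; exact: integrable_fin_num.
set M := fun t => fine (\int[p0]_x (expR (t * x))%:E)%E.
have M0 t : 0 <= M t.
  by apply: fine_ge0; apply: integral_ge0 => x _; rewrite lee_fin expR_ge0.
have PhiM t : Phi t = ln (M t) by rewrite hP.
have pos t : Phi t != 0 -> 0 < M t /\ expR (Phi t) = M t.
  move=> h; have mt : 0 < M t.
    rewrite lt_neqAle M0 andbT; apply/eqP => e; move: h.
    by rewrite PhiM -e ln0 // eqxx.
  by split => //; rewrite PhiM lnK // posrE.
have nz (s : R) : s != 0 -> Phi s != 0.
  move=> s0; rewrite PE mulf_neq0 // subr_eq0 -expR0 (inj_eq (@expR_inj R)) mulf_eq0.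
  by rewrite negb_or l0.
have [m1 e1] := pos 1 (nz _ (@oner_neq0 R)).
have n1 : (-1 : R) != 0 by rewrite oppr_eq0 oner_neq0.
have [mm1 em1] := pos (-1) (nz _ n1).
have M01 : M 0 = 1.
  have : ln (M 0) = 0 by rewrite -PhiM PE mulr0 expR0 subrr mulr0.
  case: (ltrP 0 (M 0)) => h.
    by move=> l; rewrite -(lnK h) l expR0.
  have M00 : M 0 = 0 by apply/eqP; rewrite eq_le h M0.
  have pT : p0 setT = 0%E.
    have <- : (\int[p0]_x (expR (0 * x))%:E = p0 setT)%E.
      rewrite (eq_integral (cst 1%E)) ?integral_cst ?mul1e // => x _.
      by rewrite mul0r expR0.
    by rewrite fk -/(M 0) M00.
  have := null_set_integral measurableT (measurable_int _ (hI 1)) pT.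
  by move=> e; move: m1; rewrite /M e /= ltxx.
have := @key_ineq R p0 ((Phi (-1) - Phi 1) / 2) hI.
rewrite -/(M _) -/(M _) -/(M _) M01 -e1 -em1 -!expRD.
set s := (Phi (-1) + Phi 1) / 2.
have ea : (Phi (-1) - Phi 1) / 2 + Phi 1 = s by rewrite /s; lra.
have eb : - ((Phi (-1) - Phi 1) / 2) + Phi (-1) = s by rewrite /s; lra.
rewrite ea eb => hs.
have s0 : 0 <= s.
  rewrite leNgt -expR_lt1; apply/negP => hl; move: hs; lra.
move: s0; rewrite /s !PE mulr1 mulrN1 => s0.
have g1 := expR_gt1Dx l0.
have g2 : 1 + - lam < expR (- lam) by apply: expR_gt1Dx; rewrite oppr_eq0.
rewrite lt_neqAle eq_sym K0 /=.
rewrite leNgt; apply/negP => Kn.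
have : K * ((expR lam - 1) + (expR (- lam) - 1)) < 0 by rewrite nmulr_rlt0 //; lra.
rewrite mulrDr; lra.
Qed.


Lemma dexp {R : realType} (D a : R) : derive1 (fun x => D * expR (a * x)) = fun x => D * a * expR (a * x).
Proof.
apply/funext => x; rewrite derive1E.
have h : is_derive x (1:R) (fun y => D * expR (a * y)) (D * a * expR (a * x)).
  by apply: trigger_derive; rewrite /GRing.scale /=; ring.
exact: (@derive_val _ _ _ _ _ _ _ h).
Qed.

Lemma smooth_exp {R : realType} (C a : R) : smooth_fun (fun x => C * expR (a * x)).
Proof.
have E k : derive1n k (fun x => C * expR (a * x)) = fun x => C * a ^+ k * expR (a * x).
  elim: k => [|k IH].
    by rewrite derive1n0; apply/funext => x; rewrite expr0 mulr1.
  by rewrite derive1nS IH dexp; apply/funext => x; rewrite exprS; ring.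
move=> k x; rewrite E.
have h : is_derive x (1:R) (fun y => C * a ^+ k * expR (a * y)) (C * a^+k * a * expR (a * x)).
  by apply: trigger_derive; rewrite /GRing.scale /=; ring.
by case: h.
Qed.

Lemma conv {R : realType} (Phi : R -> R) (n : nat) (a b : R) :
  (forall alpha : R, Phi alpha = expR (a * alpha + b) - expR b) ->
  exists f h : R -> R, smooth_fun f /\ smooth_fun h /\
      forall (u : R) (w : 'I_n -> R),
        h u * (\sum_(j < n) f (w j)) = \sum_(j < n) derive1 Phi (u + w j).
Proof.
move=> PE.
have -> : Phi = fun x => expR b * expR (a * x) - expR b.
  by apply/funext => x; rewrite PE expRD mulrC.
have dP : derive1 (fun x => expR b * expR (a * x) - expR b) = fun x => expR b * a * expR (a * x).
  apply/funext => x; rewrite derive1E.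
  have h : is_derive x (1:R) (fun y => expR b * expR (a * y) - expR b) (expR b * a * expR (a * x)).
    by apply: trigger_derive; rewrite /GRing.scale /=; ring.
  exact: (@derive_val _ _ _ _ _ _ _ h).
exists (fun x => 1 * expR (a * x)), (fun x => expR b * a * expR (a * x)).
split; first exact: smooth_exp.
split; first exact: smooth_exp.
move=> u w; rewrite dP mulr_sumr; apply: eq_bigr => j _.
by rewrite mulrDr expRD; ring.
Qed.

Theorem mainTheorem3 (R : realType) (p0 : {measure set R -> \bar R})
  (Phi : R -> R) (n : nat) :
  (0 < n)%N ->
  (forall alpha : R, p0.-integrable setT (fun x => (expR (alpha * x))%:E)) ->
  (forall alpha : R, Phi alpha = log_partition p0 alpha) ->
  Phi 0 = 0 ->
  smooth_fun Phi ->
  derive1n 2 Phi 0 != 0 ->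
  ((exists f h : R -> R, smooth_fun f /\ smooth_fun h /\
      forall (u : R) (w : 'I_n -> R),
        h u * (\sum_(j < n) f (w j)) = \sum_(j < n) derive1 Phi (u + w j))
   <->
   (exists a b : R, forall alpha : R, Phi alpha = expR (a * alpha + b) - expR b)).
Proof.
move=> n0 hI hP P0 sP d2; split.
- move=> [f [h [_ [_ eqn]]]].
  have [K [lam [K0 [l0 PE]]]] := @fwd_analysis R Phi f h n n0 sP d2 P0 eqn.
  have Kp := @sign_pos R p0 Phi K lam hI hP K0 l0 PE.
  exists lam, (ln K) => alpha.
  by rewrite PE expRD lnK ?posrE //; ring.
- by move=> [a [b PE]]; exact: (@conv R Phi n a b PE).
Qed.
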